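(* Let $A$ be a finite-dimensional associative superalgebra over an algebraically closed field $\mathbb{K}$ of characteristic zero whose product is not identically zero. Then $A$ does not admit simultaneously an even-symmetric structure and an odd-symmetric structure.
   Context: A superalgebra is a $\mathbb{Z}_2$-graded algebra $A=A_{\bar 0}\oplus A_{\bar 1}$ with $A_\alpha A_\beta\subseteq A_{\alpha+\beta}$; $|x|$ denotes the degree of a homogeneous element. A bilinear form $B$ on $A$ is even if $B(A_{\bar 0},A_{\bar 1})=B(A_{\bar 1},A_{\bar 0})=\{0\}$ and odd if $B(A_{\bar 0},A_{\bar 0})=B(A_{\bar 1},A_{\bar 1})=\{0\}$; supersymmetric if $B(x,y)=(-1)^{|x||y|}B(y,x)$ for homogeneous $x,y$; associative if $B(x.y,z)=B(x,y.z)$; non-degenerate if $B(x,A)=\{0\}$ implies $x=0$. An even-symmetric (resp. odd-symmetric) structure on $A$ is an even (resp. odd), supersymmetric, associative, non-degenerate bilinear form on $A$. *)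

(* Defs.v *)
From HB Require Import structures.
From mathcomp Require Import all_boot all_order all_algebra.
Set Implicit Arguments. Unset Strict Implicit. Unset Printing Implicit Defensive.
Import GRing.Theory.
Local Open Scope ring_scope.

(* A finite-dimensional superalgebra over K is modelled as a finite-dimensional
   K-vector space A (a vectType K) with a product mul : A -> A -> A and a
   Z_2-grading given by two subspaces Ad false = A_0 and Ad true = A_1 with
   A = A_0 (+) A_1 (direct sum).  Degrees are booleans; addition in Z_2 is xor. *)

Definition bilinear_product (K : fieldType) (A : vectType K) (mul : A -> A -> A) :=
  (forall (a : K) (x y z : A), mul (a *: x + y) z = a *: mul x z + mul y z) /\
  (forall (a : K) (x y z : A), mul z (a *: x + y) = a *: mul z x + mul z y).

Definition is_assoc_superalgebra (K : fieldType) (A : vectType K)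
    (mul : A -> A -> A) (Ad : bool -> {vspace A}) :=
  [/\ bilinear_product mul,
      (forall x y z : A, mul (mul x y) z = mul x (mul y z)),
      (Ad false + Ad true)%VS = fullv,
      directv (Ad false + Ad true)%VS &
      (forall (a b : bool) (x y : A), x \in Ad a -> y \in Ad b ->
          mul x y \in Ad (a (+) b))].

Definition bilinear_form (K : fieldType) (A : vectType K) (B : A -> A -> K) :=
  (forall (a : K) (x y z : A), B (a *: x + y) z = a * B x z + B y z) /\
  (forall (a : K) (x y z : A), B z (a *: x + y) = a * B z x + B z y).

Definition even_form (K : fieldType) (A : vectType K) (Ad : bool -> {vspace A})
    (B : A -> A -> K) :=
  forall x y : A, x \in Ad false -> y \in Ad true -> B x y = 0 /\ B y x = 0.

Definition odd_form (K : fieldType) (A : vectType K) (Ad : bool -> {vspace A})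
    (B : A -> A -> K) :=
  forall (a : bool) (x y : A), x \in Ad a -> y \in Ad a -> B x y = 0.

Definition supersymmetric (K : fieldType) (A : vectType K) (Ad : bool -> {vspace A})
    (B : A -> A -> K) :=
  forall (a b : bool) (x y : A), x \in Ad a -> y \in Ad b ->
    B x y = (-1) ^+ (a && b) * B y x.

Definition assoc_form (K : fieldType) (A : vectType K) (mul : A -> A -> A)
    (B : A -> A -> K) :=
  forall x y z : A, B (mul x y) z = B x (mul y z).

Definition nondegenerate (K : fieldType) (A : vectType K) (B : A -> A -> K) :=
  forall x : A, (forall y : A, B x y = 0) -> x = 0.

Definition even_symmetric_structure (K : fieldType) (A : vectType K)
    (mul : A -> A -> A) (Ad : bool -> {vspace A}) (B : A -> A -> K) :=
  [/\ bilinear_form B, even_form Ad B, supersymmetric Ad B,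
      assoc_form mul B & nondegenerate B].

Definition odd_symmetric_structure (K : fieldType) (A : vectType K)
    (mul : A -> A -> A) (Ad : bool -> {vspace A}) (B : A -> A -> K) :=
  [/\ bilinear_form B, odd_form Ad B, supersymmetric Ad B,
      assoc_form mul B & nondegenerate B].

(* Main.v *)
Require Import Defs.
From mathcomp Require Import all_boot all_order all_algebra.
Set Implicit Arguments. Unset Strict Implicit. Unset Printing Implicit Defensive.
Import GRing.Theory.
Local Open Scope ring_scope.
Definition linf (K : fieldType) (A : vectType K) (g : A -> K) :=
  forall (a : K) (x y : A), g (a *: x + y) = a * g x + g y.

Lemma linf0 (K : fieldType) (A : vectType K) (g : A -> K) : linf g -> g 0 = 0.
Proof.
move=> hg; have := hg 1 0 0; rewrite scaler0 addr0 mul1r => h.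
by apply: (@addrI _ (g 0)); rewrite addr0 -h.
Qed.

Lemma linfZ (K : fieldType) (A : vectType K) (g : A -> K) a x : linf g -> g (a *: x) = a * g x.
Proof. by move=> hg; rewrite -[a *: x]addr0 hg linf0 // addr0. Qed.

Lemma linfD (K : fieldType) (A : vectType K) (g : A -> K) x y : linf g -> g (x + y) = g x + g y.
Proof. by move=> hg; rewrite -[x]scale1r hg mul1r scale1r. Qed.

Lemma linfN (K : fieldType) (A : vectType K) (g : A -> K) x : linf g -> g (- x) = - g x.
Proof. by move=> hg; rewrite -scaleN1r linfZ // mulN1r. Qed.

Lemma linf_sum (K : fieldType) (A : vectType K) (g : A -> K) n (c : 'I_n -> K) (f : 'I_n -> A) :
  linf g -> g (\sum_(i < n) c i *: f i) = \sum_(i < n) c i * g (f i).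
Proof.
move=> hg; elim: n c f => [|n IH] c f; first by rewrite !big_ord0 linf0.
by rewrite !big_ord_recr /= linfD // IH linfZ.
Qed.

Lemma riesz (K : fieldType) (A : vectType K) (B : A -> A -> K) :
  Defs.bilinear_form B -> Defs.nondegenerate B ->
  exists R : (A -> K) -> A, forall phi, linf phi -> forall y, B (R phi) y = phi y.
Proof.
move=> [hl hr] hnd.
have linl : forall y, linf (B^~ y) by move=> y a x z; exact: hl.
have linr : forall x, linf (B x) by move=> x a y z; exact: hr.
pose n := \dim (fullv : {vspace A}).
pose e := vbasis (fullv : {vspace A}).
have hfree : free e by exact: basis_free (vbasisP _).
have expand : forall g, linf g -> forall y, g y = \sum_(i < n) coord e i y * g e`_i.
  by move=> g hg y; rewrite {1}(coord_vbasis (memvf y)) linf_sum.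
pose G := \matrix_(i < n, j < n) B e`_i e`_j.
have hBs : forall (v : 'rV[K]_n) (j : 'I_n), B (\sum_(i < n) v 0 i *: e`_i) e`_j = (v *m G) 0 j.
  by move=> v j; rewrite (linf_sum (fun i => v 0 i) (fun i => e`_i) (linl _)) mxE; apply: eq_bigr => i _; rewrite mxE.
have Gu : G \in unitmx.
  rewrite unitmxE unitfE; apply/negP => /det0P [v vn0 vG].
  move/negP: vn0; apply; apply/eqP.
  have w0 : \sum_(i < n) v 0 i *: e`_i = 0.
    apply: hnd => y; rewrite (expand _ (linr _)); apply: big1 => j _.
    by rewrite hBs vG mxE mulr0.
  apply/rowP => i; rewrite mxE.
  by rewrite -(coord_sum_free (fun i => v 0 i) i hfree) w0 linear0.
exists (fun phi => \sum_(i < n) ((\row_j phi e`_j) *m invmx G) 0 i *: e`_i).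
move=> phi hphi y; rewrite (expand _ (linr _)) (expand _ hphi).
apply: eq_bigr => j _; congr (_ * _).
by rewrite hBs mulmxKV // mxE.
Qed.
Theorem mainTheorem3 (K : closedFieldType) (A : vectType K)
    (mul : A -> A -> A) (Ad : bool -> {vspace A}) :
  [pchar K] =i pred0 ->
  is_assoc_superalgebra mul Ad ->
  (exists x y : A, mul x y != 0) ->
  ~ ((exists B : A -> A -> K, even_symmetric_structure mul Ad B) /\
     (exists B : A -> A -> K, odd_symmetric_structure mul Ad B)).
Proof.
move=> hch [[hml hmr] hassoc hfull _ hgrad] [x0 [y0 nz]]
  [[B [bB evB ssB asB ndB]] [B' [bB' oddB' ssB' asB' ndB']]].
have linl : forall y, linf (B^~ y) by move=> y a x z; exact: bB.1.
have linr : forall x, linf (B x) by move=> x a y z; exact: bB.2.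
have linl' : forall y, linf (B'^~ y) by move=> y a x z; exact: bB'.1.
have linr' : forall x, linf (B' x) by move=> x a y z; exact: bB'.2.
have decomp : forall (a : bool) z, exists p q, [/\ p \in Ad a, q \in Ad (~~ a) & z = p + q].
  move=> a z; have : z \in (Ad false + Ad true)%VS by rewrite hfull memvf.
  case/memv_addP => u Hu [v Hv ->].
  by case: a; [exists v, u; rewrite addrC | exists u, v].
have ev : forall a x y, x \in Ad a -> y \in Ad (~~ a) -> B x y = 0.
  case=> x y Hx Hy; [exact: (evB y x Hy Hx).2 | exact: (evB x y Hx Hy).1].
have uniq : forall u v, (forall c z, z \in Ad c -> B u z = B v z) -> u = v.
  move=> u v H; apply/eqP; rewrite -subr_eq0; apply/eqP; apply: ndB => y.
  have [p [q [Hp Hq ->]]] := decomp false y.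
  rewrite linfD // (linfD _ _ (linl _)) (linfD _ _ (linl _)).
  rewrite !(linfN _ (linl _)) (H _ _ Hp) (H _ _ Hq).
  by rewrite !subrr addr0.
have [R HR] := riesz bB ndB.
pose D x := R (B' x).
have HD : forall x y, B (D x) y = B' x y by move=> x y; exact: HR.
have Dpar : forall a x, x \in Ad a -> D x \in Ad (~~ a).
  move=> a x Hx; have [p [q [Hp Hq E]]] := decomp a (D x).
  suff p0 : p = 0 by rewrite E p0 add0r.
  apply: ndB => y; have [y1 [y2 [Hy1 Hy2 ->]]] := decomp a y.
  rewrite linfD // (ev _ _ _ Hp Hy2) addr0.
  have : B (D x) y1 = 0 by rewrite HD (oddB' a).
  by rewrite E (linfD _ _ (linl y1)) (ev (~~ a) q y1 Hq) ?negbK // addr0.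
have Dright : forall x y, D (mul x y) = mul (D x) y.
  move=> x y; apply: uniq => c z _.
  by rewrite HD asB' -HD asB.
have symB' : forall a c x w, x \in Ad a -> w \in Ad c ->
    B' x w = (-1) ^+ a * B x (D w).
  move=> a c x w Hx Hw; have HDw := Dpar _ _ Hw.
  rewrite (ssB' a c x w Hx Hw) -HD (ssB _ _ _ _ HDw Hx).
  by case: a c {Hx Hw HDw} => -[] /=; rewrite ?expr0 ?expr1 ?mul1r.
have Dleft : forall a b x y, x \in Ad a -> y \in Ad b ->
    D (mul x y) = (-1) ^+ a *: mul x (D y).
  move=> a b x y Hx Hy; apply: uniq => c z Hz.
  rewrite HD asB' (symB' a (b (+) c) x (mul y z) Hx (hgrad _ _ _ _ Hy Hz)).
  by rewrite Dright -asB (linfZ _ _ (linl z)).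
have DZ : forall k u, D (k *: u) = k *: D u.
  move=> k u; apply: uniq => c z _.
  by rewrite HD (linfZ _ _ (linl' z)) -HD (linfZ _ _ (linl z)).
have Dinj : forall u, D u = 0 -> u = 0.
  move=> u E; apply: ndB' => y; by rewrite -HD E (linf0 (linl y)).
have two : (2%:R : K) != 0 by rewrite (pcharf0P _).1.
have hom0 : forall a b x y, x \in Ad a -> y \in Ad b -> mul x y = 0.
  move=> a b x y Hx Hy.
  have h1 : D (D (mul x y)) = (-1) ^+ (~~ a) *: mul (D x) (D y).
    by rewrite Dright (Dleft _ _ _ _ (Dpar _ _ Hx) Hy).
  have h2 : D (D (mul x y)) = (-1) ^+ a *: mul (D x) (D y).
    by rewrite (Dleft _ _ _ _ Hx Hy) DZ Dright.
  have P0 : mul (D x) (D y) = 0.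
    have := h1; rewrite h2 => h.
    have h' : mul (D x) (D y) + mul (D x) (D y) = 0.
      case: a {h1 h2 Hx} h => /=; rewrite ?expr1 ?expr0 ?scaleN1r ?scale1r => hh.
        by rewrite -{1}hh addNr.
      by rewrite {1}hh addNr.
    have : (2%:R : K) *: mul (D x) (D y) == 0 by rewrite scaler_nat mulr2n h'.
    by rewrite scaler_eq0 (negPf two) => /eqP.

  by apply: (Dinj); apply: (Dinj); rewrite h1 P0 scaler0.
have mulDl : forall u v w, mul (u + v) w = mul u w + mul v w.
  by move=> u v w; have := hml 1 u v w; rewrite !scale1r.
have mulDr : forall u v w, mul w (u + v) = mul w u + mul w v.
  by move=> u v w; have := hmr 1 u v w; rewrite !scale1r.
move/eqP: nz; apply.
have [p [q [Hp Hq ->]]] := decomp false x0.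
have [p' [q' [Hp' Hq' ->]]] := decomp false y0.
rewrite !mulDl !mulDr (hom0 _ _ _ _ Hp Hp') (hom0 _ _ _ _ Hp Hq').
by rewrite (hom0 _ _ _ _ Hq Hp') (hom0 _ _ _ _ Hq Hq') !addr0.
Qed.
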